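(* Let $h_1,\dots,h_{n-k}$ be the generators of a valid rate-$k/n$ quantum convolutional code, where $h_i=(h_{i,1}\,|\,h_{i,2}\,|\cdots|\,h_{i,l_i})$ and each $h_{i,j}$ is an $n$-qubit Pauli operator. Then there exist an integer $m\ge 0$ and $m$-qubit Pauli operators $g_{i,j}$ ($1\le i\le n-k$, $1\le j\le l_i-1$) such that the commutation relations among the input operators of the encoding transformation described in the context are consistent with those among the corresponding output operators; that is, for any two rows $(\mathrm{in}_1\to\mathrm{out}_1)$ and $(\mathrm{in}_2\to\mathrm{out}_2)$ of the transformation, $\mathrm{in}_1\odot\mathrm{in}_2=\mathrm{out}_1\odot\mathrm{out}_2$.
   Context: Pauli operators are considered up to phase. For two Pauli operators $A,B$ on the same qubits, $A\odot B\in\{0,1\}$ equals $1$ if $A$ and $B$ anticommute and $0$ if they commute; for tensor products it is additive modulo $2$ over the factors. A qubit stream is divided into frames of $n$ qubits. A rate-$k/n$ quantum convolutional code is specified by $n-k$ generators $h_1,\dots,h_{n-k}$, where $h_i=(h_{i,1}|\cdots|h_{i,l_i})$ is a finite sequence of $n$-qubit Pauli operators ($l_i\ge1$ is the degree of $h_i$), $h_{i,j}$ acting on the $j$-th frame; the other generators of the code are all shifts of these by integer numbers of frames. The code is valid if all generators and all their frame shifts pairwise commute, i.e. for all $i,i'$ and all integers $t$, $\sum_{r}h_{i,r+t}\odot h_{i',r}=0 \pmod 2$, where $h_{i,j}:=I^{\otimes n}$ for $j\notin\{1,\dots,l_i\}$. Encoding transformation: an encoder acts on $m$ memory qubits, $n-k$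 ancilla qubits and $k$ information qubits, and outputs $n$ physical qubits and $m$ memory qubits. With $s=n-k$, set $g_{i,0}:=g_{i,l_i}:=I^{\otimes m}$, let $A_{i,0}:=Z_i$ (Pauli $Z$ on the $i$-th ancilla qubit, identity on the other ancillas) and $A_{i,j}:=I^{\otimes(n-k)}$ for $j\ge1$. The transformation consists of the rows $g_{i,j}\otimes A_{i,j}\otimes I^{\otimes k}\ \longrightarrow\ h_{i,j+1}\otimes g_{i,j+1}$ for $1\le i\le n-k$, $0\le j\le l_i-1$, where the left side is an operator on (memory, ancilla, information) qubits and the right side an operator on (physical, memory) qubits. *)

(* Defs.v *)
From mathcomp Require Import all_boot all_order all_algebra.
Set Implicit Arguments. Unset Strict Implicit. Unset Printing Implicit Defensive.

(* Single-qubit Pauli operators, up to phase. *)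
Inductive pauli1 := PI | PX | PY | PZ.

Definition anti1 (a b : pauli1) : bool :=
  match a, b with
  | PI, _ | _, PI => false
  | PX, PX | PY, PY | PZ, PZ => false
  | _, _ => true
  end.

Definition Pauli (n : nat) := 'I_n -> pauli1.

Definition pid (n : nat) : Pauli n := fun _ => PI.
Arguments pid : clear implicits.

Definition odot (n : nat) (A B : Pauli n) : bool :=
  \big[addb/false]_(q < n) anti1 (A q) (B q).

Definition tensor (a b : nat) (A : Pauli a) (B : Pauli b) : Pauli (a + b) :=
  fun q => match split q with inl i => A i | inr j => B j end.

(* Generators: h i is the sequence (h_{i,1} | ... | h_{i,l_i}); l_i = size (h i).
   hz h i j = h_{i,j} for an integer frame index j, identity outside 1..l_i. *)
Definition hz (n s : nat) (h : 'I_s -> seq (Pauli n)) (i : 'I_s) (j : int) : Pauli n :=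
  match j with
  | Posz j' => if (1 <= j') && (j' <= size (h i)) then nth (pid n) (h i) j'.-1 else pid n
  | Negz _ => pid n
  end.

(* Validity: all generators and all their frame shifts pairwise commute:
   for all i, i', t : sum_r h_{i,r+t} ⊙ h_{i',r} = 0 mod 2.  Only r in 1..l_{i'}
   contributes, so the sum is taken over that range. *)
Definition valid_qcc (n s : nat) (h : 'I_s -> seq (Pauli n)) : Prop :=
  (forall i, 0 < size (h i)) /\
  forall (i i' : 'I_s) (t : int),
    \big[addb/false]_(r < size (h i'))
       odot (hz h i (r.+1%:Z + t)) (hz h i' r.+1%:Z) = false.

Definition gfull (n s m : nat) (h : 'I_s -> seq (Pauli n)) (g : 'I_s -> nat -> Pauli m)
  (i : 'I_s) (j : nat) : Pauli m :=
  if (j == 0) || (j == size (h i)) then pid m else g i j.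

Definition anc (s : nat) (i : 'I_s) (j : nat) : Pauli s :=
  fun q => if (j == 0) && (q == i) then PZ else PI.

(* Input of row (i,j): g_{i,j} ⊗ A_{i,j} ⊗ I^k on (memory, ancilla, information). *)
Definition enc_in (n k m : nat) (h : 'I_(n - k) -> seq (Pauli n))
  (g : 'I_(n - k) -> nat -> Pauli m) (i : 'I_(n - k)) (j : nat) : Pauli (m + (n - k) + k) :=
  tensor (tensor (gfull h g i j) (anc i j)) (pid k).

(* Output of row (i,j): h_{i,j+1} ⊗ g_{i,j+1} on (physical, memory). *)
Definition enc_out (n k m : nat) (h : 'I_(n - k) -> seq (Pauli n))
  (g : 'I_(n - k) -> nat -> Pauli m) (i : 'I_(n - k)) (j : nat) : Pauli (n + m) :=
  tensor (hz h i j.+1%:Z) (gfull h g i j.+1).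

(* Main.v *)
Require Import Defs.
From mathcomp Require Import all_boot all_order all_algebra.

Lemma anti1C a b : anti1 a b = anti1 b a.
Proof. by case: a; case: b. Qed.

Lemma odotC n (A B : Pauli n) : odot A B = odot B A.
Proof. by apply: eq_bigr => q _; rewrite anti1C. Qed.

Lemma odot_pidl n (B : Pauli n) : odot (pid n) B = false.
Proof. by apply: big1 => q _. Qed.

Lemma odot_pidr n (B : Pauli n) : odot B (pid n) = false.
Proof. by rewrite odotC odot_pidl. Qed.

Lemma odot_refl n (B : Pauli n) : odot B B = false.
Proof. by apply: big1 => q _; case: (B q). Qed.

Lemma odot_tensor a b (A C : Pauli a) (B D : Pauli b) :
  odot (tensor A B) (tensor C D) = odot A C (+) odot B D.
Proof.
rewrite /odot big_split_ord /=; congr addb; apply: eq_bigr => q _;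
 rewrite /tensor.
- by have -> : split (lshift b q) = inl q by exact: (unsplitK (inl q)).
- by have -> : split (rshift a q) = inr q by exact: (unsplitK (inr q)).
Qed.

Lemma odot_anc s (i1 i2 : 'I_s) j1 j2 : odot (anc i1 j1) (anc i2 j2) = false.
Proof. by apply: big1 => q _; rewrite /anc; case: ifP; case: ifP. Qed.

Lemma big_xor_pred1 (T : finType) (p0 : T) (F : T -> bool) :
  (forall p, p != p0 -> F p = false) -> \big[addb/false]_(p : T) F p = F p0.
Proof.
move=> H; rewrite (bigD1 p0) //= big1 ?addbF // => p /H; by [].
Qed.

(* realization of an alternating matrix *)
Section Real.
Variable T0 : finType.
Variable Mb : T0 -> T0 -> bool.
Hypothesis MbC : forall x y, Mb x y = Mb y x.

Local Notation Tq := (T0 * T0)%type.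
Definition Gp (c : T0) (p : Tq) : pauli1 :=
  if (enum_rank p.1 < enum_rank p.2)%N && Mb p.1 p.2 then
    (if c == p.1 then PX else if c == p.2 then PZ else PI) else PI.

Definition Gr (c : T0) : Pauli #|{: Tq}| := fun q => Gp c (enum_val q).

Lemma Gr_odot c d : c != d -> odot (Gr c) (Gr d) = Mb c d.
Proof.
move=> cd.
rewrite /odot /Gr.
rewrite (reindex (@enum_rank Tq)) /=; last first.
  by exists enum_val => x _; rewrite ?enum_rankK ?enum_valK.
under eq_bigr => p _ do rewrite enum_rankK.
pose p0 : Tq := if (enum_rank c < enum_rank d)%N then (c, d) else (d, c).
rewrite (@big_xor_pred1 _ p0).
  rewrite /p0 /Gp; case: (boolP (enum_rank c < enum_rank d)%N) => h /=.
    by rewrite h eqxx eq_sym (negbTE cd) eqxx; case: (Mb c d).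
  rewrite -leqNgt in h.
  have h' : (enum_rank d < enum_rank c)%N.
    rewrite ltn_neqAle h andbT; apply/negP => /eqP/val_inj/enum_rank_inj E.
    by rewrite E eqxx in cd.
  by rewrite h' eqxx (negbTE cd) eqxx MbC; case: (Mb c d).
case=> x y /= hp; rewrite /Gp /=.
case: ((enum_rank x < enum_rank y)%N && Mb x y) /andP => [[hr _]|//].
have xy : x != y.
  by apply/eqP => E; rewrite E ltnn in hr.
case: (eqVneq c x) => [Ecx|ncx]; case: (eqVneq d x) => [Edx|ndx] //=.
- case: (eqVneq d y) => [E|//]; subst.
  by move: hp; rewrite /p0 hr eqxx.
- case: (eqVneq c y) => [E|//]; subst.
  by move: hp; rewrite /p0 ltnNge (ltnW hr) /= eqxx.
- case: (eqVneq c y) => [E|//]; case: (eqVneq d y) => [E'|//]; subst.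
  by rewrite eqxx in cd.
Qed.

Lemma Gr_refl c : odot (Gr c) (Gr c) = false.
Proof. exact: odot_refl. Qed.
End Real.

Lemma sum_widen (K L : nat) (F : nat -> bool) : (K <= L)%N ->
  (forall r, (K <= r)%N -> F r = false) ->
  \big[addb/false]_(r < L) F r = \big[addb/false]_(r < K) F r.
Proof.
move=> KL H; rewrite [RHS](big_ord_widen L F KL) [RHS]big_mkcond /=.
by apply: eq_bigr => r _; case: ltnP => // /H ->.
Qed.

Section Main.
Variables n k : nat.
Variable h : 'I_(n - k) -> seq (Pauli n).
Hypothesis hv : valid_qcc h.

Definition N := (\max_(i < n - k) size (h i))%N.
Definition L := N.+1.

Lemma size_leN i : (size (h i) <= N)%N.
Proof. exact: (leq_bigmax (F := fun i => size (h i)) i). Qed.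

Lemma hz_big i j : (size (h i) < j)%N -> hz h i (Posz j) = pid n.
Proof. by move=> H; rewrite /hz (leqNgt j) H andbF. Qed.

Definition M i1 j1 i2 j2 : bool := \big[addb/false]_(r < L)
  odot (hz h i1 (j1 + r.+1)%:Z) (hz h i2 (j2 + r.+1)%:Z).

Lemma MC i1 j1 i2 j2 : M i1 j1 i2 j2 = M i2 j2 i1 j1.
Proof. by apply: eq_bigr => r _; rewrite odotC. Qed.

Lemma M_refl i j : M i j i j = false.
Proof. by apply: big1 => r _; rewrite odot_refl. Qed.

Lemma M_high i1 j1 i2 j2 : (size (h i1) <= j1)%N -> M i1 j1 i2 j2 = false.
Proof.
move=> H; apply: big1 => r _; rewrite hz_big ?odot_pidl //.
by apply: (leq_ltn_trans H); rewrite addnS ltnS leq_addr.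
Qed.

Lemma M_zero1 i1 i2 j2 : M i1 0 i2 j2 = false.
Proof.
case: hv => _ /(_ i2 i1 j2) V.
rewrite /M (@sum_widen (size (h i1)) L (fun r => odot (hz h i1 (0 + r.+1)%:Z) (hz h i2 (j2 + r.+1)%:Z))); last first.
- by move=> r Hr; rewrite add0n hz_big ?odot_pidl.
- by apply: leq_trans (size_leN i1) _.
rewrite -[RHS]V; apply: eq_bigr => r _.
by rewrite add0n odotC -PoszD addnC.
Qed.

Lemma M_zero2 i1 j1 i2 : M i1 j1 i2 0 = false.
Proof. by rewrite MC M_zero1. Qed.

Lemma M_rec i1 j1 i2 j2 : M i1 j1 i2 j2 =
  odot (hz h i1 (j1.+1)%:Z) (hz h i2 (j2.+1)%:Z) (+) M i1 j1.+1 i2 j2.+1.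
Proof.
rewrite /M /L big_ord_recl big_ord_recr.
have E : odot (hz h i1 (j1.+1 + (@ord_max N).+1)%:Z)
   (hz h i2 (j2.+1 + (@ord_max N).+1)%:Z) = false.
  rewrite hz_big ?odot_pidl //.
  by apply: leq_ltn_trans (size_leN i1) _; rewrite addSn ltnS addnS; apply: leqW; apply: (leq_addl j1 N).
rewrite E Monoid.mulm1; congr addb; first by rewrite !addn1.
apply: eq_bigr => r _.
by rewrite lift0 !addSnnS.
Qed.

Definition T0 := ('I_(n - k) * 'I_L)%type.
Definition Mb (x y : T0) := M x.1 x.2 y.1 y.2.
Lemma MbC x y : Mb x y = Mb y x. Proof. exact: MC. Qed.

Definition g (i : 'I_(n - k)) (j : nat) := @Gr T0 Mb (i, inord j : 'I_L).

Lemma gval i1 j1 i2 j2 : (j1 <= size (h i1))%N -> (j2 <= size (h i2))%N ->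
  odot (gfull h g i1 j1) (gfull h g i2 j2) = M i1 j1 i2 j2.
Proof.
move=> H1 H2; rewrite /gfull.
have L1 : (j1 < L)%N by rewrite /L ltnS (leq_trans H1 (size_leN i1)).
have L2 : (j2 < L)%N by rewrite /L ltnS (leq_trans H2 (size_leN i2)).
case: (boolP ((j1 == 0) || (j1 == size (h i1)))) => [/orP[/eqP->|/eqP E]|_].
- by rewrite odot_pidl M_zero1.
- by rewrite odot_pidl M_high // E.
case: (boolP ((j2 == 0) || (j2 == size (h i2)))) => [/orP[/eqP->|/eqP E]|_].
- by rewrite odot_pidr M_zero2.
- by rewrite odot_pidr MC M_high // E.
rewrite /g; case: (eqVneq (i1, inord j1 : 'I_L) (i2, inord j2)) => [E|ne].
- case: E => -> E2.
  have E3 : j1 = j2.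
    by rewrite -(@inordK N j1 L1) -(@inordK N j2 L2) E2.
  by rewrite E2 E3 odot_refl M_refl.
- by rewrite (@Gr_odot _ _ MbC _ _ ne) /Mb /= !inordK.
Qed.
End Main.

Theorem theorem1 (n k : nat) (h : 'I_(n - k) -> seq (Pauli n)) :
  (k <= n)%N ->
  valid_qcc h ->
  exists (m : nat) (g : 'I_(n - k) -> nat -> Pauli m),
    forall (i1 i2 : 'I_(n - k)) (j1 j2 : nat),
      (j1 < size (h i1))%N -> (j2 < size (h i2))%N ->
      odot (enc_in h g i1 j1) (enc_in h g i2 j2)
      = odot (enc_out h g i1 j1) (enc_out h g i2 j2).
Proof.
move=> _ hv; exists _, (@g n k h) => i1 i2 j1 j2 H1 H2.
rewrite /enc_in /enc_out !odot_tensor odot_anc odot_pidl !addbF.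
rewrite (@gval n k h hv i1 j1 i2 j2 (ltnW H1) (ltnW H2)).
rewrite (@gval n k h hv i1 j1.+1 i2 j2.+1 H1 H2).
exact: M_rec.
Qed.
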